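(* Let $g\geq 1$, $k\geq 1$, $r\geq 1$ be integers and let $x$ be an integer with $g+1\leq x\leq 2g$. Let $T$ be the tree obtained from $r$ stars $K_{1,g}$ with centers $v_1,\ldots,v_r$, one star $K_{1,x}$ with center $v_{r+1}$, and $k$ further vertices $w,u_1,\ldots,u_{k-1}$, by adding the edges $wu_i$ ($1\le i\le k-1$) and $wv_i$ ($1\leq i\leq r+1$). Then $T$ has order $n=(g+1)r+x+1+k$, has an $R_g$-cutset, and $$\kappa_g(T)=k.$$
   Context: All graphs are finite and simple. $K_{1,t}$ denotes the star with one center and $t$ leaves. A set $S\subseteq V(G)$ is a cutset if $G-S$ is disconnected. For a non-negative integer $g$, a cutset $S$ is an $R_g$-cutset if every connected component of $G-S$ has at least $g+1$ vertices. If $G$ has at least one $R_g$-cutset, the $g$-extra connectivity $\kappa_g(G)$ is the minimum cardinality of an $R_g$-cutset of $G$. *)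

(* Defs.v *)
From mathcomp Require Import all_boot.
Set Implicit Arguments. Unset Strict Implicit. Unset Printing Implicit Defensive.

Section Graphs.
Variables (V : finType) (e : rel V).

Definition del_rel (S : {set V}) : rel V :=
  fun x y => [&& x \notin S, y \notin S & e x y].

Definition comp_of (S : {set V}) (x : V) : {set V} :=
  [set y | connect (del_rel S) x y].

Definition is_cutset (S : {set V}) : bool :=
  [exists x, exists y, [&& x \notin S, y \notin S & ~~ connect (del_rel S) x y]].

Definition is_Rg_cutset (g : nat) (S : {set V}) : bool :=
  is_cutset S && [forall x, (x \notin S) ==> (g.+1 <= #|comp_of S x|)].

Definition has_Rg_cutset (g : nat) : Prop := exists S, is_Rg_cutset g S.

(* g-extra connectivity: minimum size of an R_g-cutset (meaningful only when
   one exists; default #|V| otherwise). *)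
Definition kappa (g : nat) : nat :=
  \big[minn/#|V|]_(S : {set V} | is_Rg_cutset g S) #|S|.
End Graphs.

(* Vertices:
   inl (inl (i, a)) : star i (i < r), a = 0 is the center v_{i+1}, a = 1..g leaves
   inl (inr a)      : star K_{1,x}, a = 0 is the center v_{r+1}, a = 1..x leaves
   inr a            : a = 0 is w, a = 1..k-1 are u_1..u_{k-1} *)
Definition Tvert (g r x k : nat) : finType :=
  (('I_r * 'I_g.+1) + 'I_x.+1 + 'I_k)%type.

Definition star_adj (m : nat) (a b : 'I_m) : bool :=
  ((val a == 0) && (val b != 0)) || ((val b == 0) && (val a != 0)).

Definition Tedge (g r x k : nat) : rel (Tvert g r x k) :=
  fun p q =>
  match p, q with
  | inl (inl (i, a)), inl (inl (j, b)) => (i == j) && star_adj a b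
  | inl (inr a), inl (inr b) => star_adj a b
  | inr a, inr b => star_adj a b
  | inr a, inl (inl (_, b)) => (val a == 0) && (val b == 0)
  | inl (inl (_, b)), inr a => (val a == 0) && (val b == 0)
  | inr a, inl (inr b) => (val a == 0) && (val b == 0)
  | inl (inr b), inr a => (val a == 0) && (val b == 0)
  | _, _ => false
  end.

(* Main.v *)
Require Import Defs.
From mathcomp Require Import all_boot.
Set Implicit Arguments. Unset Strict Implicit. Unset Printing Implicit Defensive.

Lemma bigmin_leq (I : finType) (P : pred I) (F : I -> nat) d j :
  P j -> \big[minn/d]_(i | P i) F i <= F j.
Proof.
move=> Pj; have : j \in index_enum I by rewrite mem_index_enum.
elim: (index_enum I) => // a s IH; rewrite inE big_cons => /orP[/eqP<-|js].
  by rewrite Pj geq_minl.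
case: (P a); last exact: IH.
exact: leq_trans (geq_minr _ _) (IH js).
Qed.

Section T.
Variables (g r x k : nat).
Local Notation V := (Tvert g r x k.+1).
Local Notation E := (@Tedge g r x k.+1).

Lemma star_adj_sym m (a b : 'I_m) : star_adj a b = star_adj b a.
Proof. by rewrite /star_adj orbC. Qed.

Lemma Tedge_sym : symmetric E.
Proof.
move=> [[[i a]|a]|a] [[[j b]|b]|b] //=; first rewrite eq_sym; by rewrite star_adj_sym.
Qed.

Lemma del_sym (S : {set V}) : symmetric (del_rel E S).
Proof. move=> p q; rewrite /del_rel (Tedge_sym p q); by case: (p \in S); case: (q \in S). Qed.

Lemma csym (S : {set V}) : connect_sym (del_rel E S).
Proof. exact: sym_connect_sym (del_sym S). Qed.

Definition w : V := inr ord0.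
Definition isz (p : V) : bool :=
  match p with inl (inl (_, a)) => val a == 0 | inl (inr a) => val a == 0 | inr _ => true end.

Lemma isz_w (S : {set V}) p : isz p -> p \notin S -> w \notin S -> connect (del_rel E S) p w.
Proof.
move=> hp pS wS.
case: (eqVneq p w) => [->|npw]; first exact: connect0.
apply: connect1; rewrite /del_rel pS wS /=.
move: hp npw; case: p {pS} => [[[i a]|a]|a] //= ha npw.
rewrite /star_adj /= andbF /=; apply/eqP => ha0; move/eqP: npw; apply.
by have -> : a = ord0 by apply: val_inj.
Qed.

Lemma leaf_nb p q : ~~ isz p -> E p q -> isz q.
Proof.
case: p => [[[i a]|a]|a] //=; case: q => [[[j b]|b]|b] //= ha;
rewrite /star_adj ?(negbTE ha) /= ?andbT ?andbF //; by case/andP.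
Qed.

Lemma nbr (S : {set V}) p : 1 < #|comp_of E S p| -> exists q, del_rel E S p q.
Proof.
move=> hc.
case: (pickP [pred q | (q \in comp_of E S p) && (q != p)]) => [q /andP[]|none].
  rewrite inE => /connectP[s]; case: s => [|q' s] /=.
    by move=> _ ->; rewrite eqxx.
  by case/andP=> hq _ _ _; exists q'.
have : comp_of E S p \subset [set p].
  apply/subsetP => q hq; rewrite inE; move: (none q) => /= /negbT.
  by rewrite negb_and hq /= negbK.
move/subset_leq_card; rewrite cards1 => h.
by have := leq_ltn_trans h hc; rewrite ltnn.
Qed.

Definition Sw : {set V} := [set inr a | a : 'I_k.+1].

Lemma inSw p : (p \in Sw) = (if p is inr _ then true else false).
Proof.
case: p => [p|a]; last by apply/imsetP; exists a.
by apply/imsetP; case=> a _.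
Qed.

Lemma card_Sw : #|Sw| = k.+1.
Proof. by rewrite card_imset ?card_ord // => a b []. Qed.


Lemma center_conn i b :
  connect (del_rel E Sw) (inl (inl (i, ord0))) (inl (inl (i, b))).
Proof.
case: (eqVneq (val b) 0) => hb.
  by have -> : b = ord0 by apply: val_inj.
apply: connect1; rewrite /del_rel !inSw /= eqxx /star_adj /= hb.
done.
Qed.

Lemma centerx_conn b :
  connect (del_rel E Sw) (inl (inr ord0)) (inl (inr b)).
Proof.
case: (eqVneq (val b) 0) => hb.
  by have -> : b = ord0 by apply: val_inj.
apply: connect1; rewrite /del_rel !inSw /= /star_adj /= hb.
done.
Qed.

Lemma Sw_Rg (i0 : 'I_r) : g <= x -> is_Rg_cutset E g Sw.
Proof.
move=> hgx; apply/andP; split.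
  apply/existsP; exists (inl (inl (i0, ord0))); apply/existsP; exists (inl (inr ord0)).
  rewrite !inSw /=; apply/negP.
  have hcl : closed (del_rel E Sw) [pred p : V | if p is inl (inl _) then true else false].
    move=> p q; rewrite /del_rel !inSw.
    by case: p => [[[i a]|a]|a]; case: q => [[[j b]|b]|b].
  by move/(closed_connect hcl).
apply/forallP => p; apply/implyP; rewrite inSw.
case: p => [[[i a]|a]|a] // _.
  have hc : connect (del_rel E Sw) (inl (inl (i, a))) (inl (inl (i, ord0))).
    by rewrite csym; apply: center_conn.
  have hsub : [set inl (inl (i, b)) | b : 'I_g.+1] \subset comp_of E Sw (inl (inl (i, a))).
    apply/subsetP => q /imsetP[b _ ->]; rewrite inE.
    by apply: connect_trans hc (center_conn i b).
  apply: leq_trans (subset_leq_card hsub).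
  by rewrite card_imset ?card_ord // => b c [].
have hc : connect (del_rel E Sw) (inl (inr a)) (inl (inr ord0)).
  by rewrite csym; apply: centerx_conn.
have hsub : [set inl (inr b) | b : 'I_x.+1] \subset comp_of E Sw (inl (inr a)).
  apply/subsetP => q /imsetP[b _ ->]; rewrite inE.
  by apply: connect_trans hc (centerx_conn b).
apply: leq_trans (subset_leq_card hsub).
by rewrite card_imset ?card_ord // => b c [].
Qed.

Lemma Rg_sub (S : {set V}) : 0 < g -> is_Rg_cutset E g S -> Sw \subset S.
Proof.
move=> g0 /andP[/existsP[p /existsP[q /and3P[pS qS npq]]] /forallP hall].
have big1 : forall p, p \notin S -> 1 < #|comp_of E S p|.
  by move=> p' hp'; apply: leq_trans (implyP (hall p') hp').
have wS : w \in S.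
  apply/negPn/negP => wS.
  have cw : forall p, p \notin S -> connect (del_rel E S) p w.
    move=> p' hp'; case hz: (isz p'); first exact: isz_w.
    have [q' hq'] := nbr (big1 p' hp').
    move: (hq') => /and3P[_ hq'S eq'].
    apply: connect_trans (connect1 hq') _.
    apply: isz_w => //; apply: leaf_nb eq'; by rewrite hz.
  move/negP: npq; apply; apply: connect_trans (cw p pS) _.
  by rewrite csym; apply: cw.
apply/subsetP => v /imsetP[a _ ->].
case: (eqVneq (val a) 0) => ha.
  by have -> : a = ord0 by apply: val_inj.
apply/negPn/negP => aS.
have [q0 hq] := nbr (big1 _ aS).
move: hq => /and3P[_ qS' eq'].
move: eq' qS'; case: q0 => [[[j b]|b]|b] //=; rewrite /star_adj ?(negbTE ha) //=.
rewrite andbT => hb; have -> : b = ord0 by apply: val_inj; apply/eqP.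
by rewrite wS.
Qed.

End T.

Theorem lemma5p1 (g k r x : nat) :
  1 <= g -> 1 <= k -> 1 <= r -> g.+1 <= x <= g.*2 ->
  [/\ #|Tvert g r x k| = g.+1 * r + x + 1 + k,
      has_Rg_cutset (@Tedge g r x k) g
    & kappa (@Tedge g r x k) g = k].
Proof.
case: k => // k; case: r => // r g0 _ _ /andP[hgx _].
have hS := @Sw_Rg g r.+1 x k ord0 (ltnW hgx).
have hcard : #|Tvert g r.+1 x k.+1| = g.+1 * r.+1 + x + 1 + k.+1.
  by rewrite /Tvert !card_sum card_prod !card_ord mulnC addn1 !addnS !addSn.
split => //; first by exists (Sw g r.+1 x k).
apply/eqP; rewrite eqn_leq; apply/andP; split.
  rewrite /kappa; apply: leq_trans (bigmin_leq _ _ hS) _; by rewrite card_Sw.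
rewrite /kappa; elim/big_ind: _ => //.
- by rewrite hcard leq_addl.
- by move=> m n hm hn; rewrite leq_min hm hn.
- move=> S hS'; apply: leq_trans (subset_leq_card (Rg_sub g0 hS')); by rewrite card_Sw.
Qed.
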